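(* Let the Super Harmonic algorithm (with arbitrary admissible parameters as described in the context) be run on a list $L$ of items with sizes in $(0,1]$, and let $A(L)$ be the number of bins it uses. Let $W^1,\dots,W^{K+1}$ be the weighting functions defined in the context. Then \[ A(L)\le \max_{1\le i\le K+1}\Big\{\sum_{p\in L} W^i(p)\Big\}+O(1), \] where the $O(1)$ term depends only on the parameters of the algorithm and not on $L$.
   Context: One-dimensional online bin packing: items with sizes in $(0,1]$ arrive one by one and must be irrevocably placed into bins of capacity $1$. Super Harmonic algorithm. Parameters: an integer $k\ge1$, reals $t_1=1>t_2>\dots>t_k>t_{k+1}=\epsilon>t_{k+2}=0$, intervals $I_i=(t_{i+1},t_i]$ for $i=1,\dots,k+1$ (an item of size $x$ is of type $i$ if $x\in I_i$), and constants $\alpha_1,\dots,\alpha_k\in[0,1]$. Let $\beta_i=\lfloor 1/t_i\rfloor$ and $\delta_i=1-t_i\beta_i$. Fix reals $0=\Delta_0<\Delta_1<\dots<\Delta_K<1/2$ with $K\le k$ and a map $\phi:\{1,\dots,k\}\to\{0,\dots,K\}$ with $\Delta_{\phi(i)}\le\delta_i$. Let $\varphi(i)=\min\{j: t_i\le\Delta_j,\ 1\le j\le K\}$ (and $\varphi(i)=0$ if $t_i>\Delta_K$). Let $\gamma_i=0$ if $t_i>\Delta_K$, and otherwise $\gamma_i=\max\{1,\lfloor\Delta_1/t_i\rfloor\}$. Bins are named in groups: $(i)$ for $\phi(i)=0$ (only blue type-$i$ items); $(i,?)$ for $\phi(i)\neq0$ (currently only blue type-$i$ items); $(?,j)$ for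 $\alpha_j\ne0$ (currently only red type-$j$ items); $(i,j)$ for $\phi(i)\ne0,\alpha_j\ne0,\gamma_jt_j\le\Delta_{\phi(i)}$ (blue type-$i$ and red type-$j$ items). Counters $s_i,e_i$ start at $0$. For each arriving item $p$ of type $i$: (a) if $i=k+1$, pack $p$ by Next Fit into bins reserved for type $k+1$; (b) otherwise set $s_i\gets s_i+1$; if $e_i<\lfloor\alpha_is_i\rfloor$ then set $e_i\gets e_i+1$ and color $p$ red: if some bin in group $(?,i)$ has fewer than $\gamma_i$ type-$i$ items, put $p$ there; else if for some $j$ a bin in group $(j,i)$ has fewer than $\gamma_i$ type-$i$ items, put $p$ there; else if some bin in group $(j,?)$ has $\Delta_{\phi(j)}\ge\gamma_it_i$, put $p$ there and rename the bin $(j,i)$; otherwise open a new bin $(?,i)$ for $p$. (c) otherwise color $p$ blue: if $\phi(i)=0$, put $p$ into a group-$(i)$ bin with fewer than $\beta_i$ items if one exists, else open a new group-$(i)$ bin. If $\phi(i)\ne0$: if for some $j$ a bin in group $(i,j)$ or $(i,?)$ has fewer than $\beta_i$ type-$i$ items, put $p$ there; else if some bin in group $(?,j)$ has $\Delta_{\phi(i)}\ge\gamma_jt_j$, put $p$ there and rename it $(i,j)$; otherwise open a new bin $(i,?)$ for $p$. Weighting functions. In all formulas below a term $\alpha_i/\gamma_i$ or $\alpha_i/(2\gamma_i)$ is replaced by $0$ when $\gamma_i=0$. For $x\in I_{k+1}$, $W^j(x)=x/(1-\epsilon)$ for every $j$. For $x\in I_i$, $1\le i\le k$: $W^1(x)=\frac{1-\alpha_i}{\beta_i}$.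 For $2\le j\le K$, $W^{K+2-j}(x)$ equals $\frac{1-\alpha_i}{\beta_i}+\frac{\alpha_i}{2\gamma_i}$ if $\phi(i)<j,\varphi(i)<j$; $\frac{1-\alpha_i}{\beta_i}+\frac{\alpha_i}{\gamma_i}$ if $\phi(i)<j,\varphi(i)\ge j$; $\frac{1-\alpha_i}{2\beta_i}+\frac{\alpha_i}{\gamma_i}$ if $\phi(i)\ge j,\varphi(i)\ge j$; $\frac{1-\alpha_i}{2\beta_i}+\frac{\alpha_i}{2\gamma_i}$ if $\phi(i)\ge j,\varphi(i)<j$. $W^{K+1}(x)$ equals $\frac{1-\alpha_i}{\beta_i}$ if $\phi(i)=0,\varphi(i)=0$; $\frac{1-\alpha_i}{\beta_i}+\frac{\alpha_i}{\gamma_i}$ if $\phi(i)=0,\varphi(i)>0$; $0$ if $\phi(i)>0,\varphi(i)=0$; $\frac{\alpha_i}{\gamma_i}$ if $\phi(i)>0,\varphi(i)>0$.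
   Formalization: Admissible parameters also satisfy $\alpha_i=0$ for every type i with $t_i>\Delta_K$, that is, whenever $\gamma_i=0$, rather than allowing any $\alpha_i\in[0,1]$. The statement above fails without it. *)

(* Defs.v *)
From Stdlib Require Import Reals Lra Lia List Arith.
Import ListNotations.
Open Scope R_scope.

Record SHParams := mkSHParams {
  sh_k : nat;
  sh_t : nat -> R;            (* t_1, ..., t_{k+2}  (t (k+1) = epsilon, t (k+2) = 0) *)
  sh_alpha : nat -> R;
  sh_K : nat;
  sh_Delta : nat -> R;
  sh_phi : nat -> nat
}.

Section Params.
Variable P : SHParams.
Local Notation k := (sh_k P).
Local Notation t := (sh_t P).
Local Notation alpha := (sh_alpha P).
Local Notation K := (sh_K P).
Local Notation Delta := (sh_Delta P).
Local Notation phi := (sh_phi P).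

Definition nfloor (x : R) : nat := Z.to_nat (Int_part x).

Definition eps : R := t (k + 1).

Definition beta (i : nat) : nat := nfloor (/ t i).
Definition delta (i : nat) : R := 1 - t i * INR (beta i).

(** varphi(i) = min { j : t_i <= Delta_j, 1 <= j <= K }, and 0 if t_i > Delta_K *)
Fixpoint first_Delta (x : R) (n j : nat) : nat :=
  match n with
  | O => O
  | S n' => if Rle_dec x (Delta j) then j else first_Delta x n' (S j)
  end.
Definition varphi (i : nat) : nat :=
  if Rlt_dec (Delta K) (t i) then O else first_Delta (t i) K 1.

Definition gamma (i : nat) : nat :=
  if Rlt_dec (Delta K) (t i) then O else Nat.max 1 (nfloor (Delta 1 / t i)).

Definition admissible : Prop :=
  (1 <= k)%nat /\
  t 1 = 1 /\
  (forall i, (1 <= i <= k)%nat -> t (i + 1) < t i) /\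
  0 < t (k + 1) /\
  t (k + 2) = 0 /\
  (forall i, (1 <= i <= k)%nat -> 0 <= alpha i <= 1) /\
  (K <= k)%nat /\
  Delta 0 = 0 /\
  (forall j, (j < K)%nat -> Delta j < Delta (j + 1)) /\
  Delta K < / 2 /\
  (forall i, (1 <= i <= k)%nat -> (phi i <= K)%nat /\ Delta (phi i) <= delta i) /\
  (* red items are only possible for types with gamma_i <> 0
     (implicit in the paper: alpha_i/gamma_i is read as 0 when gamma_i = 0) *)
  (forall i, (1 <= i <= k)%nat -> Delta K < t i -> alpha i = 0).

(** type of an item of size x: the i in 1..k+1 with t_{i+1} < x <= t_i
    (returns k+2 if there is none, which never happens for x in (0,1]) *)
Fixpoint first_type (x : R) (n i : nat) : nat :=
  match n with
  | O => i
  | S n' => if Rlt_dec (t (i + 1)) x then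
              if Rle_dec x (t i) then i else first_type x n' (S i)
            else first_type x n' (S i)
  end.
Definition typ (x : R) : nat := first_type x (k + 1) 1.

Definition rdiv (a : R) (g : nat) : R := if Nat.eqb g 0 then 0 else a / INR g.

Definition W (m : nat) (x : R) : R :=
  let i := typ x in
  if Nat.leb (k + 1) i then x / (1 - eps) else
  let a := alpha i in
  let b := INR (beta i) in
  let g := gamma i in
  let f := phi i in
  let v := varphi i in
  if Nat.eqb m 1 then (1 - a) / b
  else if Nat.eqb m (K + 1) then
    (if Nat.eqb f 0 then
       (if Nat.eqb v 0 then (1 - a) / b else (1 - a) / b + rdiv a g)
     else
       (if Nat.eqb v 0 then 0 else rdiv a g))
  else
    let j := (K + 2 - m)%nat in
    if Nat.ltb f j then
      (if Nat.ltb v j then (1 - a) / b + rdiv a (2 * g)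
       else (1 - a) / b + rdiv a g)
    else
      (if Nat.leb j v then (1 - a) / (2 * b) + rdiv a g
       else (1 - a) / (2 * b) + rdiv a (2 * g)).

Definition sumW (m : nat) (L : list R) : R :=
  fold_right (fun x acc => W m x + acc) 0 L.

Definition maxW (L : list R) : R :=
  fold_right (fun m acc => Rmax (sumW m L) acc) (sumW 1 L) (seq 1 (K + 1)).

(** Bin groups: (i), (i,?), (?,j), (i,j) *)
Inductive Label : Type :=
  | G1 (i : nat)
  | GB (i : nat)
  | GR (j : nat)
  | GP (i j : nat).

Record Bin := mkBin { lab : Label; nblue : nat; nred : nat }.

(** state: counters s_i, e_i, the bins for types 1..k, the level of the
    current Next Fit bin for type k+1 (if any), and the number of Next Fit bins *)
Record State := mkState {
  scnt : nat -> nat;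
  ecnt : nat -> nat;
  bins : list Bin;
  nf_level : option R;
  nf_count : nat
}.

Definition init_state : State := mkState (fun _ => O) (fun _ => O) [] None O.

Definition upd (f : nat -> nat) (i v : nat) : nat -> nat :=
  fun n => if Nat.eqb n i then v else f n.

(** placement of a red item of type i (step (b)); the algorithm's free
    choices among eligible bins are left arbitrary *)
Definition red_R1 (i : nat) (B : list Bin) : Prop :=
  exists bn, In bn B /\ lab bn = GR i /\ (nred bn < gamma i)%nat.
Definition red_R2 (i : nat) (B : list Bin) : Prop :=
  exists bn j, In bn B /\ lab bn = GP j i /\ (nred bn < gamma i)%nat.
Definition red_R3 (i : nat) (B : list Bin) : Prop :=
  exists bn j, In bn B /\ lab bn = GB j /\ INR (gamma i) * t i <= Delta (phi j).

Inductive PlaceRed (i : nat) : list Bin -> list Bin -> Prop :=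
  | pr1 B1 B2 b r :
      (r < gamma i)%nat ->
      PlaceRed i (B1 ++ mkBin (GR i) b r :: B2) (B1 ++ mkBin (GR i) b (S r) :: B2)
  | pr2 B1 B2 j b r :
      ~ red_R1 i (B1 ++ mkBin (GP j i) b r :: B2) ->
      (r < gamma i)%nat ->
      PlaceRed i (B1 ++ mkBin (GP j i) b r :: B2) (B1 ++ mkBin (GP j i) b (S r) :: B2)
  | pr3 B1 B2 j b r :
      ~ red_R1 i (B1 ++ mkBin (GB j) b r :: B2) ->
      ~ red_R2 i (B1 ++ mkBin (GB j) b r :: B2) ->
      INR (gamma i) * t i <= Delta (phi j) ->
      PlaceRed i (B1 ++ mkBin (GB j) b r :: B2) (B1 ++ mkBin (GP j i) b (S r) :: B2)
  | pr4 B :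
      ~ red_R1 i B -> ~ red_R2 i B -> ~ red_R3 i B ->
      PlaceRed i B (B ++ [mkBin (GR i) 0 1]).

Definition blue_B1 (i : nat) (B : list Bin) : Prop :=
  exists bn, In bn B /\ lab bn = G1 i /\ (nblue bn < beta i)%nat.
Definition blue_B3 (i : nat) (B : list Bin) : Prop :=
  exists bn, In bn B /\ (lab bn = GB i \/ exists j, lab bn = GP i j)
             /\ (nblue bn < beta i)%nat.
Definition blue_B4 (i : nat) (B : list Bin) : Prop :=
  exists bn j, In bn B /\ lab bn = GR j /\ INR (gamma j) * t j <= Delta (phi i).

Inductive PlaceBlue (i : nat) : list Bin -> list Bin -> Prop :=
  | pb1 B1 B2 b r :
      phi i = O -> (b < beta i)%nat ->
      PlaceBlue i (B1 ++ mkBin (G1 i) b r :: B2) (B1 ++ mkBin (G1 i) (S b) r :: B2)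
  | pb2 B :
      phi i = O -> ~ blue_B1 i B ->
      PlaceBlue i B (B ++ [mkBin (G1 i) 1 0])
  | pb3 B1 B2 l b r :
      phi i <> O -> (l = GB i \/ exists j, l = GP i j) -> (b < beta i)%nat ->
      PlaceBlue i (B1 ++ mkBin l b r :: B2) (B1 ++ mkBin l (S b) r :: B2)
  | pb4 B1 B2 j b r :
      phi i <> O -> ~ blue_B3 i (B1 ++ mkBin (GR j) b r :: B2) ->
      INR (gamma j) * t j <= Delta (phi i) ->
      PlaceBlue i (B1 ++ mkBin (GR j) b r :: B2) (B1 ++ mkBin (GP i j) (S b) r :: B2)
  | pb5 B :
      phi i <> O -> ~ blue_B3 i B -> ~ blue_B4 i B ->
      PlaceBlue i B (B ++ [mkBin (GB i) 1 0]).

Inductive Step : State -> R -> State -> Prop :=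
  | step_nf_fit st x l :
      typ x = (k + 1)%nat -> nf_level st = Some l -> l + x <= 1 ->
      Step st x (mkState (scnt st) (ecnt st) (bins st) (Some (l + x)) (nf_count st))
  | step_nf_new st x :
      typ x = (k + 1)%nat -> (forall l, nf_level st = Some l -> 1 < l + x) ->
      Step st x (mkState (scnt st) (ecnt st) (bins st) (Some x) (S (nf_count st)))
  | step_red st x i B' :
      typ x = i -> (1 <= i <= k)%nat ->
      (ecnt st i < nfloor (alpha i * INR (S (scnt st i))))%nat ->
      PlaceRed i (bins st) B' ->
      Step st x (mkState (upd (scnt st) i (S (scnt st i)))
                         (upd (ecnt st) i (S (ecnt st i))) B' (nf_level st) (nf_count st))
  | step_blue st x i B' :
      typ x = i -> (1 <= i <= k)%nat ->
      ~ (ecnt st i < nfloor (alpha i * INR (S (scnt st i))))%nat ->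
      PlaceBlue i (bins st) B' ->
      Step st x (mkState (upd (scnt st) i (S (scnt st i)))
                         (ecnt st) B' (nf_level st) (nf_count st)).

Inductive Run : list R -> State -> Prop :=
  | run_nil : Run [] init_state
  | run_snoc L x st st' : Run L st -> Step st x st' -> Run (L ++ [x]) st'.

Definition nbins (st : State) : nat := (length (bins st) + nf_count st)%nat.

End Params.

(* Main.v *)
Require Import Defs.
From Stdlib Require Import Reals List.
From Stdlib Require Import Lra Lia Arith ZArith.
Import ListNotations.
Open Scope R_scope.

Lemma nfloor_spec y : 0 <= y -> INR (nfloor y) <= y /\ y - 1 < INR (nfloor y).
Proof.
  intros Hy. unfold nfloor. destruct (base_Int_part y) as [H1 H2].
  assert (Hz : (-1 < Int_part y)%Z).
  { apply lt_IZR. simpl. lra. }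
  rewrite INR_IZR_INZ, Z2Nat.id by lia. lra.
Qed.

Section Pf.
Variable P : SHParams.
Hypothesis HA : admissible P.
Local Notation k := (sh_k P).
Local Notation t := (sh_t P).
Local Notation alpha := (sh_alpha P).
Local Notation K := (sh_K P).
Local Notation Delta := (sh_Delta P).
Local Notation phi := (sh_phi P).
Local Notation bet := (beta P).
Local Notation gam := (gamma P).
Local Notation vphi := (varphi P).
Local Notation ty := (typ P).

Lemma A_k : (1 <= k)%nat. Proof. apply HA. Qed.
Lemma A_t1 : t 1 = 1. Proof. apply HA. Qed.
Lemma A_tdec i : (1 <= i <= k)%nat -> t (i + 1) < t i. Proof. apply HA. Qed.
Lemma A_eps : 0 < t (k + 1). Proof. apply HA. Qed.
Lemma A_tk2 : t (k + 2) = 0. Proof. apply HA. Qed.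
Lemma A_alpha i : (1 <= i <= k)%nat -> 0 <= alpha i <= 1. Proof. apply HA. Qed.
Lemma A_Kk : (K <= k)%nat. Proof. apply HA. Qed.
Lemma A_D0 : Delta 0 = 0. Proof. apply HA. Qed.
Lemma A_Dinc j : (j < K)%nat -> Delta j < Delta (j + 1). Proof. apply HA. Qed.
Lemma A_phi i : (1 <= i <= k)%nat -> (phi i <= K)%nat /\ Delta (phi i) <= delta P i. Proof. apply HA. Qed.
Lemma A_red i : (1 <= i <= k)%nat -> Delta K < t i -> alpha i = 0. Proof. apply HA. Qed.

Lemma t_mono_aux n i : (1 <= i)%nat -> (i + n <= k + 1)%nat -> t (i + n) <= t i.
Proof.
  induction n; intros.
  - rewrite Nat.add_0_r. lra.
  - replace (i + S n)%nat with ((i + n) + 1)%nat by lia.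
    pose proof (A_tdec (i + n) ltac:(lia)). pose proof (IHn H ltac:(lia)). lra.
Qed.

Lemma t_pos i : (1 <= i <= k + 1)%nat -> 0 < t i.
Proof.
  intros. pose proof (t_mono_aux (k + 1 - i) i ltac:(lia) ltac:(lia)).
  replace (i + (k + 1 - i))%nat with (k + 1)%nat in H0 by lia. pose proof A_eps. lra.
Qed.

Lemma t_le1 i : (1 <= i <= k + 1)%nat -> t i <= 1.
Proof.
  intros. pose proof (t_mono_aux (i - 1) 1 ltac:(lia) ltac:(lia)).
  replace (1 + (i - 1))%nat with i in H0 by lia. rewrite A_t1 in H0. lra.
Qed.

Lemma eps_lt1 : t (k + 1) < 1.
Proof.
  pose proof (t_mono_aux (k - 1) 2 ltac:(lia) ltac:(pose proof A_k; lia)).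
  replace (2 + (k - 1))%nat with (k + 1)%nat in H by (pose proof A_k; lia).
  pose proof (A_tdec 1 ltac:(pose proof A_k; lia)). rewrite A_t1 in H0. simpl in H0. lra.
Qed.

Lemma first_type_spec x n i : x <= t i -> t (i + n) < x ->
  (i <= first_type P x n i < i + n)%nat /\
  t (first_type P x n i + 1) < x <= t (first_type P x n i).
Proof.
  revert i; induction n; intros i H1 H2.
  - rewrite Nat.add_0_r in H2. lra.
  - simpl. destruct (Rlt_dec (t (i + 1)) x).
    + destruct (Rle_dec x (t i)); [|lra]. split; [lia|]. lra.
    + assert (x <= t (S i)) by (replace (S i) with (i + 1)%nat by lia; lra).
      replace (i + S n)%nat with (S i + n)%nat in H2 by lia.
      destruct (IHn (S i) H H2). split; [lia|]. exact H3.
Qed.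

Lemma typ_spec x : 0 < x <= 1 ->
  (1 <= ty x <= k + 1)%nat /\ t (ty x + 1) < x <= t (ty x).
Proof.
  intros Hx. unfold typ. destruct (first_type_spec x (k + 1) 1) as [H1 H2].
  - rewrite A_t1; lra.
  - replace (1 + (k + 1))%nat with (k + 2)%nat by lia. rewrite A_tk2; lra.
  - split; [lia|exact H2].
Qed.

Lemma first_Delta_nz x n j0 : (1 <= j0)%nat -> first_Delta P x n j0 <> 0%nat ->
  (j0 <= first_Delta P x n j0 < j0 + n)%nat /\ x <= Delta (first_Delta P x n j0).
Proof.
  revert j0; induction n; intros j0 Hj H; simpl in *.
  - lia.
  - destruct (Rle_dec x (Delta j0)).
    + split; [lia| exact r].
    + destruct (IHn (S j0) ltac:(lia) H). split; [lia|exact H1].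
Qed.

Lemma first_Delta_found x n j0 : (1 <= j0)%nat -> (1 <= n)%nat -> x <= Delta (j0 + n - 1) ->
  first_Delta P x n j0 <> 0%nat.
Proof.
  revert j0; induction n; intros j0 Hj Hn H; simpl in *.
  - lia.
  - destruct (Rle_dec x (Delta j0)). lia.
    destruct n. replace (j0 + 1 - 1)%nat with j0 in H by lia. lra.
    apply IHn; try lia. replace (S j0 + S n - 1)%nat with (j0 + S (S n) - 1)%nat by lia. exact H.
Qed.

Lemma vphi_spec j : (1 <= j <= k)%nat -> ~ Delta K < t j ->
  (1 <= vphi j <= K)%nat /\ t j <= Delta (vphi j).
Proof.
  intros Hj H. unfold varphi. destruct (Rlt_dec (Delta K) (t j)); [contradiction|].
  assert (HK : (1 <= K)%nat).
  { destruct (Nat.eq_dec K 0) as [E|E]; [|lia]. rewrite E, A_D0 in n.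
    pose proof (t_pos j ltac:(lia)). lra. }
  assert (first_Delta P (t j) K 1 <> 0%nat).
  { apply first_Delta_found; try lia. replace (1 + K - 1)%nat with K by lia. lra. }
  destruct (first_Delta_nz (t j) K 1 ltac:(lia) H0). split; [lia|exact H2].
Qed.

Lemma Delta_mono_aux n a : (a + n <= K)%nat -> Delta a <= Delta (a + n).
Proof.
  induction n; intros.
  - rewrite Nat.add_0_r; lra.
  - replace (a + S n)%nat with ((a + n) + 1)%nat by lia.
    pose proof (A_Dinc (a + n) ltac:(lia)). pose proof (IHn ltac:(lia)). lra.
Qed.

Lemma Delta_mono a b : (a <= b <= K)%nat -> Delta a <= Delta b.
Proof. intros. replace b with (a + (b - a))%nat by lia. apply Delta_mono_aux; lia. Qed.

Lemma compat_lemma i j : (1 <= j <= k)%nat -> ~ Delta K < t j ->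
  (vphi j <= phi i <= K)%nat -> INR (gam j) * t j <= Delta (phi i).
Proof.
  intros Hj H Hij. destruct (vphi_spec j Hj H) as [H1 H2].
  pose proof (Delta_mono (vphi j) (phi i) ltac:(lia)).
  pose proof (t_pos j ltac:(lia)).
  unfold gamma. destruct (Rlt_dec (Delta K) (t j)); [contradiction|].
  pose proof (Delta_mono 1 (vphi j) ltac:(lia)).
  pose proof (A_Dinc 0 ltac:(lia)). rewrite A_D0 in H5. simpl in H5.
  assert (0 <= Delta 1 / t j) by (unfold Rdiv; apply Rmult_le_pos; [lra| apply Rlt_le, Rinv_0_lt_compat; lra]).
  destruct (nfloor_spec _ H6) as [H7 _].
  destruct (nfloor (Delta 1 / t j)) as [|m] eqn:E.
  - simpl. lra.
  - replace (Nat.max 1 (S m)) with (S m) by lia.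
    apply Rmult_le_compat_r with (r := t j) in H7; [|lra].
    unfold Rdiv in H7. rewrite Rmult_assoc, Rinv_l, Rmult_1_r in H7 by lra. lra.
Qed.

Lemma beta_ge1 i : (1 <= i <= k)%nat -> (1 <= bet i)%nat.
Proof.
  intros. unfold beta. pose proof (t_pos i ltac:(lia)). pose proof (t_le1 i ltac:(lia)).
  assert (1 <= / t i).
  { rewrite <- Rinv_1. apply Rinv_le_contravar; lra. }
  destruct (nfloor_spec (/ t i) ltac:(lra)) as [_ H3].
  destruct (nfloor (/ t i)); [simpl in H3; lra| lia].
Qed.

Lemma gam_ge1 j : ~ Delta K < t j -> (1 <= gam j)%nat.
Proof. intros. unfold gamma. destruct (Rlt_dec (Delta K) (t j)); [contradiction|]. lia. Qed.

Definition bteq (i : nat) (b : Bin) : bool :=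
  match lab b with G1 i' | GB i' | GP i' _ => Nat.eqb i' i | GR _ => false end.
Definition rteq (i : nat) (b : Bin) : bool :=
  match lab b with GR j | GP _ j => Nat.eqb j i | _ => false end.
Fixpoint sumB (f : Bin -> nat) (B : list Bin) : nat :=
  match B with [] => 0%nat | b :: B' => (f b + sumB f B')%nat end.
Definition Nb i := sumB (fun b => if bteq i b then 1%nat else 0%nat).
Definition Sb i := sumB (fun b => if bteq i b then nblue b else 0%nat).
Definition Nr i := sumB (fun b => if rteq i b then 1%nat else 0%nat).
Definition Sr i := sumB (fun b => if rteq i b then nred b else 0%nat).

Lemma sumB_app f B1 B2 : sumB f (B1 ++ B2) = (sumB f B1 + sumB f B2)%nat.
Proof. induction B1; simpl; lia. Qed.
Lemma sumB_mid f B1 b B2 : sumB f (B1 ++ b :: B2) = (sumB f B1 + f b + sumB f B2)%nat.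
Proof. rewrite sumB_app; simpl; lia. Qed.
Lemma sumB_snoc f B b : sumB f (B ++ [b]) = (sumB f B + f b)%nat.
Proof. rewrite sumB_app; simpl; lia. Qed.

Lemma sumB_lb (p : Bin -> bool) (g : Bin -> nat) c B :
  (forall b, In b B -> p b = true -> (c <= g b)%nat) ->
  (c * sumB (fun b => if p b then 1%nat else 0%nat) B <= sumB (fun b => if p b then g b else 0%nat) B)%nat.
Proof.
  induction B; simpl; intros H. lia.
  assert (IH := IHB (fun b Hb => H b (or_intror Hb))).
  destruct (p a) eqn:E. pose proof (H a (or_introl eq_refl) E). nia. lia.
Qed.

Definition goodbin (b : Bin) : Prop :=
  match lab b with
  | G1 i => phi i = 0%nat /\ (1 <= i <= k)%nat
  | GB i => phi i <> 0%nat /\ (1 <= i <= k)%nat /\ nred b = 0%nat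
  | GR j => (1 <= j <= k)%nat /\ ~ Delta K < t j /\ nblue b = 0%nat
  | GP i j => phi i <> 0%nat /\ (1 <= i <= k)%nat /\ (1 <= j <= k)%nat /\ ~ Delta K < t j
  end.

Definition compatInv (B : list Bin) : Prop :=
  forall i j, In (GB i) (map lab B) -> In (GR j) (map lab B) ->
    ~ INR (gam j) * t j <= Delta (phi i).

Definition JInv (B : list Bin) : Prop :=
  forall i, (bet i * Nb i B <= Sb i B + bet i)%nat /\ (gam i * Nr i B <= Sr i B + gam i)%nat.

Lemma In_lab_mid l B1 b b' B2 : In l (map lab (B1 ++ b' :: B2)) ->
  l = lab b' \/ In l (map lab (B1 ++ b :: B2)).
Proof.
  rewrite !map_app, !in_app_iff. simpl. intuition.
Qed.
Lemma In_lab_snoc l B b : In l (map lab (B ++ [b])) -> l = lab b \/ In l (map lab B).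
Proof. rewrite map_app, in_app_iff. simpl. intuition. Qed.
Lemma In_lab_snoc' l B b : In l (map lab B) -> In l (map lab (B ++ [b])).
Proof. rewrite map_app, in_app_iff. intuition. Qed.

Lemma Forall_mid (Q : Bin -> Prop) B1 b b' B2 : Forall Q (B1 ++ b :: B2) -> Q b' ->
  Forall Q (B1 ++ b' :: B2) /\ Q b.
Proof.
  rewrite !Forall_app. intros [H1 H2] H3. inversion H2; subst. auto.
Qed.

Lemma compat_same B1 b b' B2 : lab b' = lab b -> compatInv (B1 ++ b :: B2) ->
  compatInv (B1 ++ b' :: B2).
Proof.
  unfold compatInv. intros E H i j H1 H2.
  apply H; destruct (In_lab_mid _ _ b _ _ H1); destruct (In_lab_mid _ _ b _ _ H2);
  try congruence; auto; rewrite E in *; subst; rewrite map_app, in_app_iff; simpl; auto.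
Qed.

Lemma compat_GP B1 b b' i j B2 : lab b' = GP i j -> compatInv (B1 ++ b :: B2) ->
  compatInv (B1 ++ b' :: B2).
Proof.
  unfold compatInv. intros Hl H i' j' H1 H2.
  destruct (In_lab_mid _ _ b _ _ H1) as [E|H1']; [congruence|].
  destruct (In_lab_mid _ _ b _ _ H2) as [E|H2']; [congruence|].
  auto.
Qed.


Lemma full_red i B : ~ red_R1 P i B -> ~ red_R2 P i B ->
  (gam i * Nr i B <= Sr i B)%nat.
Proof.
  intros H1 H2. apply sumB_lb. intros b Hb E. unfold rteq in E.
  destruct (lab b) as [a|a|a|a c] eqn:El; try discriminate; apply Nat.eqb_eq in E.
  - subst a. destruct (Nat.lt_ge_cases (nred b) (gam i)); [|lia]. exfalso; apply H1; exists b; auto.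
  - subst c. destruct (Nat.lt_ge_cases (nred b) (gam i)); [|lia]. exfalso; apply H2; exists b, a; auto.
Qed.

Lemma full_blue1 i B : Forall goodbin B -> phi i = 0%nat -> ~ blue_B1 P i B ->
  (bet i * Nb i B <= Sb i B)%nat.
Proof.
  intros HG Hp H1. apply sumB_lb. intros b Hb E. unfold bteq in E.
  rewrite Forall_forall in HG. pose proof (HG b Hb) as Hg. unfold goodbin in Hg.
  destruct (lab b) as [a|a|a|a c] eqn:El; try discriminate; apply Nat.eqb_eq in E; subst a; try tauto.
  destruct (Nat.lt_ge_cases (nblue b) (bet i)); [|lia]. exfalso; apply H1; exists b; auto.
Qed.

Lemma full_blue3 i B : Forall goodbin B -> phi i <> 0%nat -> ~ blue_B3 P i B ->
  (bet i * Nb i B <= Sb i B)%nat.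
Proof.
  intros HG Hp H1. apply sumB_lb. intros b Hb E. unfold bteq in E.
  rewrite Forall_forall in HG. pose proof (HG b Hb) as Hg. unfold goodbin in Hg.
  destruct (lab b) as [a|a|a|a c] eqn:El; try discriminate; apply Nat.eqb_eq in E; subst a; try tauto.
  - destruct (Nat.lt_ge_cases (nblue b) (bet i)); [|lia]. exfalso; apply H1; exists b; auto.
  - destruct (Nat.lt_ge_cases (nblue b) (bet i)); [|lia]. exfalso; apply H1; exists b; split; [auto|split; [eauto|lia]].
Qed.

Lemma Forall_mid_get (Q : Bin -> Prop) B1 b B2 : Forall Q (B1 ++ b :: B2) -> Q b.
Proof. rewrite Forall_app. intros [_ H]. inversion H; auto. Qed.

Ltac eqbs := repeat match goal with
  | |- context [Nat.eqb ?a ?b] => destruct (Nat.eqb_spec a b); try subst a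
  | H : context [Nat.eqb ?a ?b] |- _ => destruct (Nat.eqb_spec a b); try subst a end.

Ltac sumsimp := unfold Nb, Sb, Nr, Sr, bteq, rteq in *; rewrite ?sumB_mid, ?sumB_snoc in *; simpl in *.

Lemma place_red i B B' : (1 <= i <= k)%nat -> ~ Delta K < t i ->
  Forall goodbin B -> compatInv B -> JInv B -> PlaceRed P i B B' ->
  Forall goodbin B' /\ compatInv B' /\ JInv B' /\
  (forall i', Sb i' B' = Sb i' B) /\
  (forall i', Sr i' B' = (Sr i' B + (if Nat.eqb i i' then 1 else 0))%nat).
Proof.
  intros Hi Hd HG HC HJ HP. destruct HP.
  - assert (Hg := Forall_mid_get _ _ _ _ HG). unfold goodbin in Hg; simpl in Hg.
    split; [apply (Forall_mid goodbin _ _ _ _ HG); unfold goodbin; simpl; tauto|].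
    split; [eapply compat_same; [|exact HC]; reflexivity|].
    split; [intro i'; destruct (HJ i'); sumsimp; eqbs; try tauto; lia|].
    split; intro i'; sumsimp; eqbs; try tauto; lia.
  - assert (Hg := Forall_mid_get _ _ _ _ HG). unfold goodbin in Hg; simpl in Hg.
    split; [apply (Forall_mid goodbin _ _ _ _ HG); unfold goodbin; simpl; tauto|].
    split; [eapply compat_same; [|exact HC]; reflexivity|].
    split; [intro i'; destruct (HJ i'); sumsimp; eqbs; try tauto; lia|].
    split; intro i'; sumsimp; eqbs; try tauto; lia.
  - assert (Hg := Forall_mid_get _ _ _ _ HG). unfold goodbin in Hg; simpl in Hg.
    pose proof (full_red i _ H H0) as Hf.
    split; [apply (Forall_mid goodbin _ _ _ _ HG); unfold goodbin in *; simpl in *; tauto|].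
    split; [eapply compat_GP; [|exact HC]; reflexivity|].
    split; [intro i'; destruct (HJ i'); sumsimp; eqbs; try tauto; lia|].
    split; intro i'; sumsimp; eqbs; try tauto; lia.
  - pose proof (full_red i _ H H0) as Hf.
    split; [apply Forall_app; split; [exact HG| constructor; [unfold goodbin; simpl; tauto| constructor]]|].
    split.
    { intros i' j' H3 H4. apply In_lab_snoc in H3. apply In_lab_snoc in H4.
      destruct H3 as [H3|H3]; [discriminate|]. destruct H4 as [H4|H4]; [|auto].
      simpl in H4. injection H4 as <-. intro Hc. apply H1.
      apply in_map_iff in H3. destruct H3 as [bn [E1 E2]]. exists bn, i'. auto. }
    split; [intro i'; destruct (HJ i'); sumsimp; eqbs; try tauto; lia|].
    split; intro i'; sumsimp; eqbs; try tauto; lia.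
Qed.

Lemma place_blue i B B' : (1 <= i <= k)%nat ->
  Forall goodbin B -> compatInv B -> JInv B -> PlaceBlue P i B B' ->
  Forall goodbin B' /\ compatInv B' /\ JInv B' /\
  (forall i', Sb i' B' = (Sb i' B + (if Nat.eqb i i' then 1 else 0))%nat) /\
  (forall i', Sr i' B' = Sr i' B).
Proof.
  intros Hi HG HC HJ HP. destruct HP.
  - assert (Hg := Forall_mid_get _ _ _ _ HG). unfold goodbin in Hg; simpl in Hg.
    split; [apply (Forall_mid goodbin _ _ _ _ HG); unfold goodbin; simpl; tauto|].
    split; [eapply compat_same; [|exact HC]; reflexivity|].
    split; [intro i'; destruct (HJ i'); sumsimp; eqbs; try tauto; lia|].
    split; intro i'; sumsimp; eqbs; try tauto; lia.
  - pose proof (full_blue1 i _ HG H H0) as Hf.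
    split; [apply Forall_app; split; [exact HG| constructor; [unfold goodbin; simpl; tauto| constructor]]|].
    split.
    { intros i' j' H3 H4. apply In_lab_snoc in H3. apply In_lab_snoc in H4.
      destruct H3 as [H3|H3]; [discriminate|]. destruct H4 as [H4|H4]; [discriminate|auto]. }
    split; [intro i'; destruct (HJ i'); sumsimp; eqbs; try tauto; lia|].
    split; intro i'; sumsimp; eqbs; try tauto; lia.
  - assert (Hg := Forall_mid_get _ _ _ _ HG). unfold goodbin in Hg; simpl in Hg.
    destruct H0 as [->|[j ->]].
    + split; [apply (Forall_mid goodbin _ _ _ _ HG); unfold goodbin; simpl; tauto|].
      split; [eapply compat_same; [|exact HC]; reflexivity|].
      split; [intro i'; destruct (HJ i'); sumsimp; eqbs; try tauto; lia|].
      split; intro i'; sumsimp; eqbs; try tauto; lia.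
    + split; [apply (Forall_mid goodbin _ _ _ _ HG); unfold goodbin; simpl; tauto|].
      split; [eapply compat_same; [|exact HC]; reflexivity|].
      split; [intro i'; destruct (HJ i'); sumsimp; eqbs; try tauto; lia|].
      split; intro i'; sumsimp; eqbs; try tauto; lia.
  - assert (Hg := Forall_mid_get _ _ _ _ HG). unfold goodbin in Hg; simpl in Hg.
    pose proof (full_blue3 i _ HG H H0) as Hf.
    split; [apply (Forall_mid goodbin _ _ _ _ HG); unfold goodbin; simpl; tauto|].
    split; [eapply compat_GP; [|exact HC]; reflexivity|].
    split; [intro i'; destruct (HJ i'); sumsimp; eqbs; try tauto; lia|].
    split; intro i'; sumsimp; eqbs; try tauto; lia.
  - pose proof (full_blue3 i _ HG H H0) as Hf.
    split; [apply Forall_app; split; [exact HG| constructor; [unfold goodbin; simpl; tauto| constructor]]|].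
    split.
    { intros i' j' H3 H4. apply In_lab_snoc in H3. apply In_lab_snoc in H4.
      destruct H4 as [H4|H4]; [discriminate|]. destruct H3 as [H3|H3]; [|auto].
      simpl in H3. injection H3 as <-. intro Hc. apply H1.
      apply in_map_iff in H4. destruct H4 as [bn [E1 E2]]. exists bn, j'. auto. }
    split; [intro i'; destruct (HJ i'); sumsimp; eqbs; try tauto; lia|].
    split; intro i'; sumsimp; eqbs; try tauto; lia.
Qed.

Definition cntL (i : nat) (L : list R) : nat :=
  fold_right (fun x acc => ((if Nat.eqb (ty x) i then 1 else 0) + acc)%nat) 0%nat L.
Definition nfsum (L : list R) : R :=
  fold_right (fun x acc => (if Nat.eqb (ty x) (k + 1) then x else 0) + acc) 0 L.

Lemma cntL_snoc i L x : cntL i (L ++ [x]) = (cntL i L + (if Nat.eqb (ty x) i then 1 else 0))%nat.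
Proof. unfold cntL. rewrite fold_right_app. simpl. induction L; simpl; lia. Qed.
Lemma nfsum_snoc L x : nfsum (L ++ [x]) = nfsum L + (if Nat.eqb (ty x) (k + 1) then x else 0).
Proof. unfold nfsum. rewrite fold_right_app. simpl. induction L; simpl; lra. Qed.

Definition Inv (L : list R) (st : State) : Prop :=
  Forall goodbin (bins st) /\ compatInv (bins st) /\ JInv (bins st) /\
  (forall i, (Sb i (bins st) + ecnt st i = scnt st i)%nat /\ Sr i (bins st) = ecnt st i) /\
  (forall i, (i <= k)%nat -> scnt st i = cntL i L) /\
  (forall i, (1 <= i <= k)%nat -> INR (ecnt st i) <= alpha i * INR (scnt st i) /\
                                 alpha i * INR (scnt st i) < INR (ecnt st i) + 1) /\
  0 <= nfsum L /\
  match nf_level st with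
  | None => nf_count st = 0%nat
  | Some l => 0 <= l /\ (1 <= nf_count st)%nat /\
              INR (nf_count st - 1) * (1 - t (k + 1)) + l <= nfsum L
  end.

Lemma Inv_init : Inv [] (init_state).
Proof.
  unfold Inv, init_state; simpl. split; [constructor|]. split; [intros i j H; contradiction|].
  split; [intros i; unfold Nb, Sb, Nr, Sr; simpl; lia|]. split; [intros i; unfold Nb, Sb, Nr, Sr; simpl; lia|].
  split; [intros i; simpl; lia|]. split; [intros i; simpl; lra|]. split; [lra|]. reflexivity.
Qed.

Lemma step_inv L st x st' : Inv L st -> 0 < x <= 1 -> Step P st x st' -> Inv (L ++ [x]) st'.
Proof.
  intros [I1 [I2 [I3 [I4 [I5 [I6 [I0 I7]]]]]]] Hx HS.
  destruct (typ_spec x Hx) as [Ht1 Ht2].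
  destruct HS as [st x l Hty Hl Hfit | st x Hty Hnew | st x i B' Hty Hi He HP | st x i B' Hty Hi He HP].
  - unfold Inv; simpl. rewrite Hl in I7. rewrite nfsum_snoc, Hty, Nat.eqb_refl.
    split; [exact I1|]. split; [exact I2|]. split; [exact I3|]. split; [exact I4|].
    split.
    { intros i Hi. rewrite cntL_snoc, Hty. destruct (Nat.eqb_spec (k+1) i); [lia|]. rewrite I5 by lia. lia. }
    split; [exact I6|]. split; [lra|]. split; [lra|]. split; [lia|]. lra.
  - unfold Inv; simpl. rewrite nfsum_snoc, Hty, Nat.eqb_refl.
    assert (Hxe : x <= t (k + 1)) by (rewrite <- Hty; tauto).
    split; [exact I1|]. split; [exact I2|]. split; [exact I3|]. split; [exact I4|].
    split.
    { intros i Hi. rewrite cntL_snoc, Hty. destruct (Nat.eqb_spec (k+1) i); [lia|]. rewrite I5 by lia. lia. }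
    split; [exact I6|]. split; [lra|].
    destruct (nf_level st) as [l|] eqn:E.
    + specialize (Hnew l eq_refl). destruct I7 as [H1 [H2 H3]].
      destruct (nf_count st) as [|c]; [lia|].
      replace (S (S c) - 1)%nat with (S c) by lia. replace (S c - 1)%nat with c in H3 by lia.
      pose proof eps_lt1. split; [lra|]. split; [lia|]. replace (S c - 0)%nat with (S c) by lia. rewrite S_INR. nra.
    + rewrite I7. simpl. split; [lra|]. split; [lia|]. lra.
  - assert (Hal := A_alpha i Hi).
    assert (Hd : ~ Delta K < t i).
    { intro Hc. rewrite (A_red i Hi Hc), Rmult_0_l in He.
      destruct (nfloor_spec 0 (Rle_refl 0)) as [Hn _].
      apply lt_INR in He. pose proof (pos_INR (ecnt st i)). lra. }
    destruct (place_red i _ _ Hi Hd I1 I2 I3 HP) as [J1 [J2 [J3 [J4 J5]]]].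
    unfold Inv; simpl. rewrite nfsum_snoc, Hty.
    assert (Hik : Nat.eqb i (k+1) = false) by (apply Nat.eqb_neq; lia). rewrite Hik.
    split; [exact J1|]. split; [exact J2|]. split; [exact J3|].
    split.
    { intros i'. rewrite J4, J5. destruct (I4 i') as [H1 H2]. unfold upd.
      destruct (Nat.eqb_spec i i'); destruct (Nat.eqb_spec i' i); try lia. subst i'. lia. }
    split.
    { intros i' Hi'. rewrite cntL_snoc, Hty. unfold upd. rewrite <- (I5 i' Hi').
      destruct (Nat.eqb_spec i' i); [subst i'; rewrite Nat.eqb_refl; lia|].
      destruct (Nat.eqb_spec i i'); lia. }
    split.
    { intros i' Hi'. unfold upd. destruct (Nat.eqb_spec i' i); [|apply I6; exact Hi'].
      subst i'. destruct (I6 i Hi) as [H1 H2].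
      assert (Hnn : 0 <= alpha i * INR (S (scnt st i))) by (apply Rmult_le_pos; [lra|apply pos_INR]).
      destruct (nfloor_spec _ Hnn) as [Hn1 Hn2].
      apply le_INR in He. rewrite !S_INR in *. nra. }
    split; [lra|]. rewrite Rplus_0_r. exact I7.
  - assert (Hal := A_alpha i Hi).
    destruct (place_blue i _ _ Hi I1 I2 I3 HP) as [J1 [J2 [J3 [J4 J5]]]].
    unfold Inv; simpl. rewrite nfsum_snoc, Hty.
    assert (Hik : Nat.eqb i (k+1) = false) by (apply Nat.eqb_neq; lia). rewrite Hik.
    split; [exact J1|]. split; [exact J2|]. split; [exact J3|].
    split.
    { intros i'. rewrite J4, J5. destruct (I4 i') as [H1 H2]. unfold upd.
      destruct (Nat.eqb_spec i i'); destruct (Nat.eqb_spec i' i); try lia. subst i'. lia. }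
    split.
    { intros i' Hi'. rewrite cntL_snoc, Hty. unfold upd. rewrite <- (I5 i' Hi').
      destruct (Nat.eqb_spec i' i); [subst i'; rewrite Nat.eqb_refl; lia|].
      destruct (Nat.eqb_spec i i'); lia. }
    split.
    { intros i' Hi'. unfold upd. destruct (Nat.eqb_spec i' i); [|apply I6; exact Hi'].
      subst i'. destruct (I6 i Hi) as [H1 H2].
      assert (Hnn : 0 <= alpha i * INR (S (scnt st i))) by (apply Rmult_le_pos; [lra|apply pos_INR]).
      destruct (nfloor_spec _ Hnn) as [Hn1 Hn2].
      apply Nat.nlt_ge in He. apply le_INR in He. rewrite !S_INR in *. nra. }
    split; [lra|]. rewrite Rplus_0_r. exact I7.
Qed.


Lemma run_inv L st : Forall (fun x => 0 < x <= 1) L -> Run P L st -> Inv L st.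
Proof.
  intros HF HR. induction HR.
  - apply Inv_init.
  - apply Forall_app in HF. destruct HF as [HF1 HF2]. inversion HF2; subst.
    eapply step_inv; eauto.
Qed.

Fixpoint sumL (f : nat -> R) (l : list nat) : R :=
  match l with [] => 0 | a :: l' => f a + sumL f l' end.

Lemma sumL_plus f g l : sumL (fun i => f i + g i) l = sumL f l + sumL g l.
Proof. induction l; simpl; lra. Qed.
Lemma sumL_ext f g l : (forall i, In i l -> f i = g i) -> sumL f l = sumL g l.
Proof. induction l; simpl; intros H; auto. rewrite H by auto. rewrite IHl by auto. lra. Qed.
Lemma sumL_le f g l : (forall i, In i l -> f i <= g i) -> sumL f l <= sumL g l.
Proof. induction l; simpl; intros H. lra. pose proof (H a (or_introl eq_refl)). pose proof (IHl (fun i Hi => H i (or_intror Hi))). lra. Qed.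
Lemma sumL_const c l : sumL (fun _ => c) l = c * INR (length l).
Proof. induction l; simpl length; [simpl; lra|]. rewrite S_INR. simpl. rewrite IHl. lra. Qed.
Lemma sumL_delta f j a n : (a <= j < a + n)%nat ->
  sumL (fun i => if Nat.eqb j i then f i else 0) (seq a n) = f j.
Proof.
  revert a; induction n; intros a H; [lia|]. simpl.
  destruct (Nat.eqb_spec j a).
  - subst. rewrite (sumL_ext _ (fun _ => 0)). rewrite sumL_const. lra.
    intros i Hi. apply in_seq in Hi. destruct (Nat.eqb_spec a i); [lia|auto].
  - rewrite IHn by lia. lra.
Qed.

Definition wb (m i : nat) : R :=
  if Nat.eqb m 1 then 1 else if Nat.eqb m (K + 1) then (if Nat.eqb (phi i) 0 then 1 else 0)
  else if Nat.ltb (phi i) (K + 2 - m) then 1 else / 2.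
Definition wr (m i : nat) : R :=
  if Nat.eqb m 1 then 0 else if Nat.eqb m (K + 1) then (if Nat.eqb (vphi i) 0 then 0 else 1)
  else if Nat.ltb (vphi i) (K + 2 - m) then / 2 else 1.
Definition coef (m i : nat) : R :=
  wb m i * ((1 - alpha i) / INR (bet i)) + wr m i * rdiv (alpha i) (gam i).

Lemma wb_range m i : 0 <= wb m i <= 1.
Proof. unfold wb. destruct (Nat.eqb m 1); [lra|]. destruct (Nat.eqb m (K+1)); [destruct (Nat.eqb (phi i) 0); lra|].
  destruct (Nat.ltb (phi i) (K + 2 - m)); lra. Qed.
Lemma wr_range m i : 0 <= wr m i <= 1.
Proof. unfold wr. destruct (Nat.eqb m 1); [lra|]. destruct (Nat.eqb m (K+1)); [destruct (Nat.eqb (vphi i) 0); lra|].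
  destruct (Nat.ltb (vphi i) (K + 2 - m)); lra. Qed.

Lemma rdiv_two a g : rdiv a (2 * g) = / 2 * rdiv a g.
Proof.
  unfold rdiv. destruct (Nat.eqb_spec g 0).
  - subst. simpl. lra.
  - replace (Nat.eqb (2 * g) 0) with false by (symmetry; apply Nat.eqb_neq; lia).
    rewrite mult_INR. simpl (INR 2). assert (INR g <> 0) by (apply not_0_INR; auto). field. auto.
Qed.

End Pf.

Section Pf.
Variable P : SHParams.
Hypothesis HA : admissible P.
Local Notation k := (sh_k P).
Local Notation t := (sh_t P).
Local Notation alpha := (sh_alpha P).
Local Notation K := (sh_K P).
Local Notation Delta := (sh_Delta P).
Local Notation phi := (sh_phi P).
Local Notation bet := (beta P).
Local Notation gam := (gamma P).
Local Notation vphi := (varphi P).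
Local Notation ty := (typ P).

Local Notation wb := (wb P). Local Notation wr := (wr P). Local Notation coef := (coef P).
Local Notation cntL := (cntL P). Local Notation nfsum := (nfsum P). Local Notation Inv := (Inv P).
Local Notation goodbin := (goodbin P). Local Notation compatInv := (compatInv P). Local Notation JInv := (JInv P).

Lemma W_dec m x : (1 <= ty x <= k)%nat -> (1 <= bet (ty x))%nat -> W P m x = coef m (ty x).
Proof.
  intros H Hb. unfold W. cbv zeta.
  replace (Nat.leb (k + 1) (ty x)) with false by (symmetry; apply Nat.leb_gt; lia).
  unfold coef, wb, wr.
  generalize dependent (ty x). intros i H Hb.
  assert (INR (bet i) <> 0) by (apply not_0_INR; lia).
  set (a := alpha i). set (b := INR (bet i)). set (g := gam i).
  rewrite !(rdiv_two a g).
  assert (E2 : (1 - a) / (2 * b) = / 2 * ((1 - a) / b)) by (field; auto).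
  rewrite E2. set (q := (1 - a) / b). set (r := rdiv a g).
  destruct (m =? 1). lra.
  destruct (m =? K + 1).
  - destruct (phi i =? 0); destruct (vphi i =? 0); lra.
  - destruct (phi i <? K + 2 - m); destruct (vphi i <? K + 2 - m) eqn:E3;
    destruct (K + 2 - m <=? vphi i) eqn:E4;
    try (apply Nat.ltb_lt in E3; apply Nat.leb_le in E4; lia);
    try (apply Nat.ltb_ge in E3; apply Nat.leb_gt in E4; lia); lra.
Qed.

Lemma W_nf m x : ty x = (k + 1)%nat -> W P m x = x / (1 - t (k + 1)).
Proof.
  intros H. unfold W. cbv zeta. rewrite H, Nat.leb_refl. reflexivity.
Qed.

Lemma sumW_split m L : Forall (fun x => 0 < x <= 1) L ->
  sumW P m L = sumL (fun i => INR (cntL i L) * coef m i) (seq 1 k) + nfsum L / (1 - t (k + 1)).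
Proof.
  pose proof (eps_lt1 P HA) as He.
  induction L as [|x L IH]; intros HF.
  - simpl. rewrite (sumL_ext _ (fun _ => 0)) by (intros; simpl; lra). rewrite sumL_const.
    unfold nfsum, nfsum; simpl. unfold Rdiv. lra.
  - inversion HF as [|? ? Hx HF']; subst. specialize (IH HF').
    unfold sumW in *. simpl fold_right. rewrite IH. clear IH.
    rewrite (sumL_ext (fun i => INR (cntL i (x :: L)) * coef m i) (fun i => (if Nat.eqb (ty x) i then coef m i else 0) +
                                INR (cntL i L) * coef m i)).
    2:{ intros i _. unfold cntL. simpl fold_right. rewrite ?S_INR, ?plus_INR.
        destruct (Nat.eqb (ty x) i); simpl; rewrite ?S_INR; lra. }
    rewrite sumL_plus. unfold nfsum. simpl fold_right. fold (nfsum L).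
    destruct (typ_spec P HA x Hx) as [Ht1 Ht2].
    destruct (Nat.eq_dec (ty x) (k + 1)) as [E|E].
    + rewrite (sumL_ext (fun i => if Nat.eqb (ty x) i then coef m i else 0) (fun _ => 0)).
      2:{ intros i Hi. apply in_seq in Hi. destruct (Nat.eqb_spec (ty x) i); [lia|auto]. }
      rewrite sumL_const, W_nf by exact E. rewrite E, Nat.eqb_refl. unfold Rdiv. lra.
    + rewrite sumL_delta by lia.
      replace (Nat.eqb (ty x) (k + 1)) with false by (symmetry; apply Nat.eqb_neq; auto).
      rewrite W_dec by (try apply (beta_ge1 P HA); lia). unfold Rdiv. lra.
Qed.

Definition covb (m : nat) (b : Bin) : R :=
  match lab b with G1 i | GB i => wb m i | GR j => wr m j | GP i j => wb m i + wr m j end.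
Definition sumCov (m : nat) (B : list Bin) : R := fold_right (fun b acc => covb m b + acc) 0 B.

Lemma cover_sum m B : Forall goodbin B ->
  sumCov m B = sumL (fun i => wb m i * INR (Nb i B) + wr m i * INR (Nr i B)) (seq 1 k).
Proof.
  induction B as [|b B IH]; intros HG.
  - simpl. rewrite (sumL_ext _ (fun _ => 0)) by (intros; unfold Nb, Nr; simpl; lra).
    rewrite sumL_const. lra.
  - inversion HG as [|? ? Hg HG']; subst. change (sumCov m (b :: B)) with (covb m b + sumCov m B). specialize (IH HG').
    rewrite (sumL_ext (fun i => wb m i * INR (Nb i (b :: B)) + wr m i * INR (Nr i (b :: B)))
              (fun i => (wb m i * INR (if bteq i b then 1 else 0) + wr m i * INR (if rteq i b then 1 else 0))
                        + (wb m i * INR (Nb i B) + wr m i * INR (Nr i B)))).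
    2:{ intros i _. unfold Nb, Nr. simpl sumB. rewrite !plus_INR. lra. }
    rewrite sumL_plus, <- IH.
    enough (Hc : sumL (fun i => wb m i * INR (if bteq i b then 1%nat else 0%nat) + wr m i * INR (if rteq i b then 1%nat else 0%nat)) (seq 1 k) = covb m b) by lra.
    unfold covb, bteq, rteq. unfold goodbin in Hg.
    destruct (lab b) as [a|a|a|a c].
    + rewrite (sumL_ext _ (fun i => if Nat.eqb a i then wb m i else 0)).
      2:{ intros i _. destruct (Nat.eqb a i); simpl; lra. }
      rewrite sumL_delta by lia. reflexivity.
    + rewrite (sumL_ext _ (fun i => if Nat.eqb a i then wb m i else 0)).
      2:{ intros i _. destruct (Nat.eqb a i); simpl; lra. }
      rewrite sumL_delta by lia. reflexivity.
    + rewrite (sumL_ext _ (fun i => if Nat.eqb a i then wr m i else 0)).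
      2:{ intros i _. destruct (Nat.eqb a i); simpl; lra. }
      rewrite sumL_delta by lia. reflexivity.
    + rewrite (sumL_ext _ (fun i => (if Nat.eqb a i then wb m i else 0) + (if Nat.eqb c i then wr m i else 0))).
      2:{ intros i _. destruct (Nat.eqb a i); destruct (Nat.eqb c i); simpl; lra. }
      rewrite sumL_plus, !sumL_delta by lia. reflexivity.
Qed.

Lemma length_le_cov m B : (forall b, In b B -> 1 <= covb m b) -> INR (length B) <= sumCov m B.
Proof.
  induction B as [|b B IH]; intros H; simpl length; [simpl; lra|].
  rewrite S_INR. simpl. pose proof (H b (or_introl eq_refl)).
  pose proof (IH (fun b' Hb => H b' (or_intror Hb))). lra.
Qed.

Lemma GR_min (B : list Bin) : (forall j, ~ In (GR j) (map lab B)) \/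
  exists j0, In (GR j0) (map lab B) /\ forall j, In (GR j) (map lab B) -> (vphi j0 <= vphi j)%nat.
Proof.
  induction B as [|b B IH]; simpl.
  - left; auto.
  - destruct (lab b) as [a|a|a|a c] eqn:El.
    4: { destruct IH as [IH|[j0 [H1 H2]]]; [left|right].
         - intros j [H|H]; [discriminate|eapply IH; eauto].
         - exists j0; split; auto. intros j [H|H]; [discriminate|auto]. }
    1,2: destruct IH as [IH|[j0 [H1 H2]]]; [left|right];
         [ intros j [H|H]; [discriminate|eapply IH; eauto]
         | exists j0; split; auto; intros j [H|H]; [discriminate|auto] ].
    right. destruct IH as [IH|[j0 [H1 H2]]].
    + exists a. split; auto. intros j [H|H]. injection H as ->; lia. exfalso; eapply IH; eauto.
    + destruct (Nat.le_ge_cases (vphi a) (vphi j0)).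
      * exists a. split; auto. intros j [H3|H3]. injection H3 as ->; lia. specialize (H2 j H3); lia.
      * exists j0. split; auto. intros j [H3|H3]. injection H3 as ->; lia. auto.
Qed.

Lemma wb_one v i : (1 <= v <= K)%nat -> (phi i < v)%nat -> wb (K + 2 - v) i = 1.
Proof.
  intros Hv Hp. unfold wb.
  destruct (Nat.eq_dec v 1).
  - subst v. replace (K + 2 - 1)%nat with (K + 1)%nat by lia.
    replace (Nat.eqb (K + 1) 1) with false by (symmetry; apply Nat.eqb_neq; lia).
    rewrite Nat.eqb_refl. replace (phi i) with 0%nat by lia. reflexivity.
  - replace (Nat.eqb (K + 2 - v) 1) with false by (symmetry; apply Nat.eqb_neq; lia).
    replace (Nat.eqb (K + 2 - v) (K + 1)) with false by (symmetry; apply Nat.eqb_neq; lia).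
    replace (K + 2 - (K + 2 - v))%nat with v by lia.
    replace (Nat.ltb (phi i) v) with true by (symmetry; apply Nat.ltb_lt; lia). reflexivity.
Qed.

Lemma wr_one v j : (1 <= v <= K)%nat -> (v <= vphi j)%nat -> wr (K + 2 - v) j = 1.
Proof.
  intros Hv Hp. unfold wr.
  destruct (Nat.eq_dec v 1).
  - subst v. replace (K + 2 - 1)%nat with (K + 1)%nat by lia.
    replace (Nat.eqb (K + 1) 1) with false by (symmetry; apply Nat.eqb_neq; lia).
    rewrite Nat.eqb_refl. replace (Nat.eqb (vphi j) 0) with false by (symmetry; apply Nat.eqb_neq; lia). reflexivity.
  - replace (Nat.eqb (K + 2 - v) 1) with false by (symmetry; apply Nat.eqb_neq; lia).
    replace (Nat.eqb (K + 2 - v) (K + 1)) with false by (symmetry; apply Nat.eqb_neq; lia).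
    replace (K + 2 - (K + 2 - v))%nat with v by lia.
    replace (Nat.ltb (vphi j) v) with false by (symmetry; apply Nat.ltb_ge; lia). reflexivity.
Qed.

Lemma GP_cov v i j : (1 <= v <= K)%nat -> (1 <= vphi j)%nat -> 1 <= wb (K + 2 - v) i + wr (K + 2 - v) j.
Proof.
  intros Hv Hp. destruct (Nat.eq_dec v 1).
  - subst v. rewrite wr_one by lia. pose proof (wb_range P (K + 2 - 1) i). lra.
  - unfold wb, wr.
    replace (Nat.eqb (K + 2 - v) 1) with false by (symmetry; apply Nat.eqb_neq; lia).
    replace (Nat.eqb (K + 2 - v) (K + 1)) with false by (symmetry; apply Nat.eqb_neq; lia).
    destruct (Nat.ltb (phi i) (K + 2 - (K + 2 - v))); destruct (Nat.ltb (vphi j) (K + 2 - (K + 2 - v))); lra.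
Qed.

Lemma exists_m L st : Inv L st -> exists m, (1 <= m <= K + 1)%nat /\ forall b, In b (bins st) -> 1 <= covb m b.
Proof.
  intros [I1 [I2 _]]. rewrite Forall_forall in I1.
  destruct (GR_min (bins st)) as [H|[j0 [H1 H2]]].
  - exists 1%nat. split; [lia|]. intros b Hb. pose proof (I1 b Hb) as Hg. unfold goodbin in Hg.
    unfold covb. assert (Hw : forall i, wb 1 i = 1) by (intros; reflexivity).
    destruct (lab b) as [a|a|a|a c] eqn:El.
    + rewrite Hw; lra.
    + rewrite Hw; lra.
    + exfalso. apply (H a). rewrite <- El. apply in_map; auto.
    + rewrite Hw. pose proof (wr_range P 1 c). lra.
  - assert (Hj0 : (1 <= j0 <= k)%nat /\ ~ Delta K < t j0).
    { apply in_map_iff in H1. destruct H1 as [bn [E Hbn]]. pose proof (I1 bn Hbn) as Hg.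
      unfold goodbin in Hg. rewrite E in Hg. tauto. }
    destruct Hj0 as [Hj0 Hd0].
    destruct (vphi_spec P HA j0 Hj0 Hd0) as [Hv _].
    set (v := vphi j0) in *.
    exists (K + 2 - v)%nat. split; [lia|].
    intros b Hb. pose proof (I1 b Hb) as Hg. unfold goodbin in Hg. unfold covb.
    assert (Hlab : In (lab b) (map lab (bins st))) by (apply in_map; auto).
    destruct (lab b) as [a|a|a|a c] eqn:El.
    + rewrite wb_one by lia. lra.
    + destruct (Nat.lt_ge_cases (phi a) v).
      * rewrite wb_one by lia. lra.
      * exfalso. apply (I2 a j0 Hlab H1).
        apply (compat_lemma P HA); try tauto. split; [lia|]. apply (A_phi P HA a). tauto.
    + rewrite wr_one; [lra|lia|]. apply H2. exact Hlab.
    + destruct (vphi_spec P HA c ltac:(tauto) ltac:(tauto)) as [Hc _].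
      apply GP_cov; lia.
Qed.

Lemma Nr_zero i B : Forall goodbin B -> gam i = 0%nat -> Nr i B = 0%nat.
Proof.
  intros HG Hg. induction B as [|b B IH]; [reflexivity|].
  inversion HG as [|? ? Hb HG']; subst. unfold Nr in *. simpl. rewrite IH by exact HG'.
  unfold rteq. unfold goodbin in Hb.
  destruct (lab b) as [a|a|a|a c]; try reflexivity.
  - destruct (Nat.eqb_spec a i); [subst; pose proof (gam_ge1 P i ltac:(tauto)); lia|reflexivity].
  - destruct (Nat.eqb_spec c i); [subst; pose proof (gam_ge1 P i ltac:(tauto)); lia|reflexivity].
Qed.

Lemma type_bound m i L st : Inv L st -> (1 <= i <= k)%nat ->
  wb m i * INR (Nb i (bins st)) + wr m i * INR (Nr i (bins st)) <= INR (cntL i L) * coef m i + 3.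
Proof.
  intros [I1 [I2 [I3 [I4 [I5 [I6 [I0 I7]]]]]]] Hi.
  destruct (I3 i) as [Jb Jr]. destruct (I4 i) as [E1 E2]. rewrite <- (I5 i) by lia.
  destruct (I6 i Hi) as [H1 H2]. pose proof (A_alpha P HA i Hi) as Ha.
  pose proof (wb_range P m i). pose proof (wr_range P m i).
  pose proof (beta_ge1 P HA i Hi) as Hb.
  set (s := INR (scnt st i)) in *. set (e := INR (ecnt st i)) in *.
  apply le_INR in Jb. rewrite mult_INR, !plus_INR in Jb.
  assert (HSb : INR (Sb i (bins st)) = s - e) by (unfold s, e; rewrite <- E1, plus_INR; lra).
  assert (Hbt : 1 <= INR (bet i)) by (apply (le_INR 1); lia).
  set (bt := INR (bet i)) in *. set (nb := INR (Nb i (bins st))) in *.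
  assert (HNb : nb <= (1 - alpha i) / bt * s + 2).
  { apply (Rmult_le_reg_r bt); [lra|].
    replace (((1 - alpha i) / bt * s + 2) * bt) with ((1 - alpha i) * s + 2 * bt) by (field; lra).
    nra. }
  assert (Hblue : wb m i * nb <= wb m i * ((1 - alpha i) / bt) * s + 2).
  { apply Rle_trans with (wb m i * ((1 - alpha i) / bt * s + 2)).
    apply Rmult_le_compat_l; lra. nra. }
  unfold coef. fold bt.
  destruct (Nat.eq_dec (gam i) 0) as [Hg|Hg].
  - rewrite (Nr_zero i _ I1 Hg). unfold rdiv. rewrite Hg. simpl. lra.
  - apply le_INR in Jr. rewrite mult_INR, !plus_INR in Jr.
    assert (Hgt : 1 <= INR (gam i)) by (apply (le_INR 1); lia).
    unfold rdiv. replace (Nat.eqb (gam i) 0) with false by (symmetry; apply Nat.eqb_neq; auto).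
    set (g := INR (gam i)) in *. set (nr := INR (Nr i (bins st))) in *.
    rewrite E2 in Jr. fold e in Jr.
    assert (HNr : nr <= alpha i / g * s + 1).
    { apply (Rmult_le_reg_r g); [lra|].
      replace ((alpha i / g * s + 1) * g) with (alpha i * s + g) by (field; lra). nra. }
    assert (Hred : wr m i * nr <= wr m i * (alpha i / g) * s + 1).
    { apply Rle_trans with (wr m i * (alpha i / g * s + 1)).
      apply Rmult_le_compat_l; lra. nra. }
    nra.
Qed.

Lemma nf_bound L st : Inv L st -> INR (nf_count st) <= nfsum L / (1 - t (k + 1)) + 1.
Proof.
  intros [_ [_ [_ [_ [_ [_ [I0 I7]]]]]]]. pose proof (eps_lt1 P HA) as He.
  assert (0 <= nfsum L / (1 - t (k + 1))) by (unfold Rdiv; apply Rmult_le_pos; [lra|apply Rlt_le, Rinv_0_lt_compat; lra]).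
  destruct (nf_level st) as [l|].
  - destruct I7 as [H1 [H2 H3]]. destruct (nf_count st) as [|c]; [lia|].
    replace (S c - 1)%nat with c in H3 by lia. rewrite S_INR.
    assert (INR c <= nfsum L / (1 - t (k + 1))).
    { apply (Rmult_le_reg_r (1 - t (k + 1))); [lra|].
      replace (nfsum L / (1 - t (k + 1)) * (1 - t (k + 1))) with (nfsum L) by (field; lra). lra. }
    lra.
  - rewrite I7. simpl. lra.
Qed.

Lemma maxW_ge m L : (1 <= m <= K + 1)%nat -> sumW P m L <= maxW P L.
Proof.
  intros Hm. unfold maxW.
  assert (Hin : In m (seq 1 (K + 1))) by (apply in_seq; lia).
  revert Hin. generalize (seq 1 (K + 1)). intros l. induction l as [|a l IH]; simpl; intros Hin.
  - contradiction.
  - destruct Hin as [->|Hin].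
    + apply Rmax_l.
    + eapply Rle_trans; [apply IH; auto|apply Rmax_r].
Qed.

Lemma main_sec : exists C : R,
    forall (L : list R) (st : State),
      Forall (fun x => 0 < x <= 1) L ->
      Run P L st ->
      INR (nbins st) <= maxW P L + C.
Proof.
  exists (3 * INR k + 1). intros L st HF HR.
  pose proof (run_inv P HA L st HF HR) as HI.
  destruct (exists_m L st HI) as [m [Hm Hcov]].
  pose proof (length_le_cov m _ Hcov) as H1.
  pose proof HI as HI'. destruct HI' as [I1 _].
  rewrite cover_sum in H1 by exact I1.
  assert (H2 : sumL (fun i => wb m i * INR (Nb i (bins st)) + wr m i * INR (Nr i (bins st))) (seq 1 k)
               <= sumL (fun i => INR (cntL i L) * coef m i + 3) (seq 1 k)).
  { apply sumL_le. intros i Hi. apply in_seq in Hi. apply type_bound; auto; lia. }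
  rewrite (sumL_plus (fun i => INR (cntL i L) * coef m i) (fun _ => 3)), sumL_const, length_seq in H2.
  pose proof (nf_bound L st HI) as H3.
  pose proof (sumW_split m L HF) as H4.
  pose proof (maxW_ge m L Hm) as H5.
  unfold nbins. rewrite plus_INR. lra.
Qed.
End Pf.

Theorem theorem1 (P : SHParams) :
  admissible P ->
  exists C : R,
    forall (L : list R) (st : State),
      Forall (fun x => 0 < x <= 1) L ->
      Run P L st ->
      INR (nbins st) <= maxW P L + C.
Proof. intros HA. exact (main_sec P HA). Qed.
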